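(* Let $K\ge 2$, let $\mathcal{X}$ be an instance space, let $\mathcal{D}$ be a joint distribution of $(X,Y)$ on $\mathcal{X}\times[K]$ and $\overline{\mathcal{D}}$ a joint distribution of $(X,\overline{Y})$ on $\mathcal{X}\times[K]$ with the same marginal of $X$, such that $\mathbb{P}(\overline{Y}=\cdot\mid X=x)=\mathbf{T}\,\mathbb{P}(Y=\cdot\mid X=x)$ for all $x$, where $\mathbf{T}$ has $0$ on the diagonal and $\frac{1}{K-1}$ off the diagonal. Let $\mathbf{g}:\mathcal{X}\to\mathbb{R}^K$ be a decision function and $s:\mathbb{R}\to\mathbb{R}_+$ a binary loss with $s(z)+s(-z)=1$ for all $z$. Consider either (OVA) $\ell(k,\mathbf{g}(x))=s(\mathbf{g}_k(x))+\frac{1}{K-1}\sum_{k'\neq k}s(-\mathbf{g}_{k'}(x))$ and $\overline{\ell}_{c}(\overline{k},\mathbf{g}(x))=\frac{1}{K-1}\sum_{k\neq\overline{k}}s(\mathbf{g}_k(x))+s(-\mathbf{g}_{\overline{k}}(x))$; or (PC) $\ell(k,\mathbf{g}(x))=\sum_{k'\neq k}s(\mathbf{g}_k(x)-\mathbf{g}_{k'}(x))$ and $\overline{\ell}_{c}(\overline{k},\mathbf{g}(x))=\sum_{k'\neq\overline{k}}s(\mathbf{g}_{k'}(x)-\mathbf{g}_{\overline{k}}(x))$. Let $\overline{\ell}(k,\mathbf{g}(x))=-(K-1)\ell(k,\mathbf{g}(x))+\sum_{j=1}^K\ell(j,\mathbf{g}(x))$ and $\overline{R}(\mathbf{g};\overline{\ell})=\mathbb{E}_{(X,\overline{Y})\sim\overline{\mathcal{D}}}[\overline{\ell}(\overline{Y},\mathbf{g}(X))]$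 (which equals the classification risk $\mathbb{E}_{\mathcal{D}}[\ell(Y,\mathbf{g}(X))]$). Then there are non-negative constants $M_1,M_2$ with $\sum_{\overline{y}=1}^K\overline{\ell}_{c}(\overline{y},\mathbf{g}(x))=M_1$ for all $x$ and $\overline{\ell}_{c}(\overline{y},\mathbf{g}(x))+\ell(\overline{y},\mathbf{g}(x))=M_2$ for all $x,\overline{y}$, and $$\overline{R}(\mathbf{g};\overline{\ell})=(K-1)\,\mathbb{E}_{(X,\overline{Y})\sim\overline{\mathcal{D}}}\big[\overline{\ell}_{c}(\overline{Y},\mathbf{g}(X))\big]-M_1+M_2.$$
   Context: $\mathbf{g}_k(x)$ denotes the $k$-th coordinate of $\mathbf{g}(x)$. The losses labelled OVA and PC are the one-versus-all and pairwise-comparison multi-class losses; $\overline{\ell}_c$ denotes their complementary-label versions (the paper writes these also as $\overline{\ell}$, with the same symbol as the loss built from $\ell$; here they are distinguished by the subscript $c$). *)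

(* Defs.v *)
From HB Require Import structures.
From mathcomp Require Import all_boot all_order all_algebra.
From mathcomp Require Import all_classical all_reals all_analysis.
Set Implicit Arguments. Unset Strict Implicit. Unset Printing Implicit Defensive.
Import Order.TTheory GRing.Theory Num.Theory.
Local Open Scope ring_scope.

Inductive loss_kind := OVA | PC.

Section Losses.
Variables (R : realType) (K : nat) (s : R -> R).

(* ell(k, v) with v = g(x) in R^K, labels [K] = 'I_K *)
Definition ell (lk : loss_kind) (k : 'I_K) (v : 'I_K -> R) : R :=
  match lk with
  | OVA => s (v k) + (K.-1)%:R^-1 * \sum_(k' < K | k' != k) s (- v k')
  | PC => \sum_(k' < K | k' != k) s (v k - v k')
  end.

Definition ellc (lk : loss_kind) (kb : 'I_K) (v : 'I_K -> R) : R :=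
  match lk with
  | OVA => (K.-1)%:R^-1 * \sum_(k < K | k != kb) s (v k) + s (- v kb)
  | PC => \sum_(k' < K | k' != kb) s (v k' - v kb)
  end.

Definition ellbar (lk : loss_kind) (k : 'I_K) (v : 'I_K -> R) : R :=
  - (K.-1)%:R * ell lk k v + \sum_(j < K) ell lk j v.

Definition Tmat : 'M[R]_K :=
  \matrix_(i < K, j < K) (if i == j then 0 else (K.-1)%:R^-1).
End Losses.

(* P(Ybar = k | X = x) = (T P(Y = . | X = x))_k *)
Definition etabar (R : realType) (K : nat) (T : Type) (eta : T -> 'I_K -> R)
  (x : T) (k : 'I_K) : R :=
  \sum_(j < K) Tmat R K k j * eta x j.

(* A joint law of (X, Y) on T x [K] is given by the marginal law P of X and
   the class-conditional probabilities p x k = P(Y = k | X = x).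
   Expectation of f(X, Y) under that joint law. *)
Definition joint_expect d (T : measurableType d) (R : realType) (K : nat)
  (P : probability T R) (p : T -> 'I_K -> R) (f : T -> 'I_K -> R) : \bar R :=
  (\int[P]_x (\sum_(k < K) p x k * f x k)%:E)%E.

(* Main.v *)
Require Import Defs.
From HB Require Import structures.
From mathcomp Require Import all_boot all_order all_algebra.
From mathcomp Require Import all_classical all_reals all_analysis.
From mathcomp Require Import lra ring.
Import Order.TTheory GRing.Theory Num.Theory.
Local Open Scope ring_scope.
Section Aux.
Variables (R : realType) (K : nat) (s : R -> R).
Hypothesis K2 : (2 <= K)%N.
Hypothesis s0 : forall z, 0 <= s z.
Hypothesis s1 : forall z, s z + s (- z) = 1.

Definition M1f lk : R := match lk with OVA => K%:R | PC => K%:R * K.-1%:R / 2 end.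
Definition M2f lk : R := match lk with OVA => 2 | PC => K.-1%:R end.

Lemma n0 : (K.-1)%:R != 0 :> R.
Proof. rewrite pnatr_eq0 -lt0n; by case: K K2 => [|[|]]. Qed.

Lemma KS : K%:R = K.-1%:R + 1 :> R.
Proof. by rewrite -{1}(prednK (ltnW K2)) -natr1. Qed.

Lemma card_neq (kb : 'I_K) : \sum_(k < K | k != kb) (1:R) = K.-1%:R.
Proof.
have H : \sum_(k < K) (1:R) = 1 + \sum_(k < K | k != kb) 1 by rewrite (bigD1 kb).
rewrite sumr_const card_ord KS in H.
by apply: (@addrI _ 1); rewrite -H addrC.
Qed.

Lemma ell_ge0 lk kb (v : 'I_K -> R) : 0 <= ell s lk kb v.
Proof.
case: lk => /=; last by apply: sumr_ge0.
apply: addr_ge0 => //; apply: mulr_ge0; first by rewrite invr_ge0 ler0n.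
by apply: sumr_ge0.
Qed.

Lemma ellc_ge0 lk kb (v : 'I_K -> R) : 0 <= ellc s lk kb v.
Proof.
case: lk => /=; last by apply: sumr_ge0.
apply: addr_ge0 => //; apply: mulr_ge0; first by rewrite invr_ge0 ler0n.
by apply: sumr_ge0.
Qed.

Lemma M2_eq lk kb (v : 'I_K -> R) : ellc s lk kb v + ell s lk kb v = M2f lk.
Proof.
case: lk => /=.
  have E : \sum_(k < K | k != kb) (s (v k) + s (- v k)) = K.-1%:R.
    by rewrite -(card_neq kb); apply: eq_bigr => *; exact: s1.
  rewrite big_split /= in E.
  have h2 : K.-1%:R^-1 * \sum_(k < K | k != kb) s (v k) +
            K.-1%:R^-1 * \sum_(k < K | k != kb) s (- v k) = 1.
    by rewrite -mulrDr E mulVf // n0.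
  have h1 := s1 (v kb).
  lra.
rewrite -big_split -(card_neq kb); apply: eq_bigr => k _.
by rewrite -[v kb - v k]opprB; apply: s1.
Qed.

Lemma M1_eq lk (v : 'I_K -> R) : \sum_(kb < K) ellc s lk kb v = M1f lk.
Proof.
case: lk => /=.
  pose S := \sum_(k < K) s (v k).
  have H : forall kb : 'I_K, \sum_(k < K | k != kb) s (v k) = S - s (v kb).
    by move=> kb; rewrite /S [in RHS](bigD1 kb) //=; lra.
  have EST : S + \sum_(k < K) s (- v k) = K%:R.
    rewrite /S -big_split /=; under eq_bigr do rewrite s1.
    by rewrite sumr_const card_ord.
  rewrite big_split /= -mulr_sumr.
  rewrite (eq_bigr (fun i => S - s (v i))); last by move=> i _; exact: H.
  rewrite sumrB sumr_const card_ord -/S.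
  have -> : S *+ K - S = K.-1%:R * S by rewrite -[S *+ K]mulr_natl KS; ring.
  rewrite mulrA mulVf ?n0 // mul1r.
  lra.
pose S := \sum_(kb < K) \sum_(k' < K | k' != kb) s (v k' - v kb).
have ES : S = \sum_(kb < K) \sum_(k' < K | k' != kb) s (v kb - v k').
  rewrite /S (exchange_big_dep xpredT) //=.
  apply: eq_bigr => b _; apply: eq_bigl => a; by rewrite eq_sym.
have E2 : S + S = K%:R * K.-1%:R.
  rewrite {2}ES -big_split /=.
  under eq_bigr => kb _.
    rewrite -big_split /=.
    under eq_bigr => k _ do rewrite -[v kb - v k]opprB s1.
    rewrite card_neq.
  over.
  by rewrite sumr_const card_ord mulr_natl.
rewrite -/S. lra.
Qed.

Lemma ellbar_eq lk k (v : 'I_K -> R) :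
  ellbar s lk k v = K.-1%:R * ellc s lk k v - M1f lk + M2f lk.
Proof.
rewrite /ellbar.
have E : forall j, ell s lk j v = M2f lk - ellc s lk j v.
  by move=> j; rewrite -(M2_eq lk j v); lra.
under eq_bigr do rewrite E.
rewrite E sumrB -(M1_eq lk v) sumr_const card_ord -[_ *+ K]mulr_natl KS.
ring.
Qed.

Lemma Tsum (j : 'I_K) : \sum_(k < K) Tmat R K k j = 1.
Proof.
under eq_bigr do rewrite mxE.
rewrite (bigD1 j) //= eqxx add0r.
rewrite (eq_bigr (fun _ => 1 * K.-1%:R^-1)); last first.
  by move=> i /negbTE ->; rewrite mul1r.
by rewrite -mulr_suml card_neq mulfV // n0.
Qed.

Lemma T_ge0 k j : 0 <= Tmat R K k j.
Proof. by rewrite mxE; case: ifP => _ //; rewrite invr_ge0 ler0n. Qed.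

End Aux.
From mathcomp Require Import measurable_realfun.
Lemma msum_cond d (T : measurableType d) (R : realType) (K : nat)
  (P : pred 'I_K) (h : 'I_K -> T -> R) :
  (forall i, measurable_fun setT (h i)) ->
  measurable_fun setT (fun x => \sum_(i < K | P i) h i x).
Proof.
move=> mh.
rewrite (_ : (fun x => _) = fun x => \sum_(i < K) (if P i then h i x else 0)).
  apply: measurable_sum => i; case: (P i) => //; exact: measurable_cst.
by apply/funext => x; rewrite big_mkcond.
Qed.

Theorem corollary2 (R : realType) (K : nat) (d : measure_display)
  (T : measurableType d) (P : probability T R) (eta : T -> 'I_K -> R)
  (g : T -> 'I_K -> R) (s : R -> R) (lk : loss_kind) :
  (2 <= K)%N ->
  (forall x k, 0 <= eta x k) ->
  (forall x, \sum_(k < K) eta x k = 1) ->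
  (forall k, measurable_fun setT (fun x => eta x k)) ->
  (forall k, measurable_fun setT (fun x => g x k)) ->
  measurable_fun setT s ->
  (forall z, 0 <= s z) ->
  (forall z, s z + s (- z) = 1) ->
  exists M1 M2 : R, 0 <= M1 /\ 0 <= M2 /\
    (forall x, \sum_(yb < K) ellc (K:=K) s lk yb (g x) = M1) /\
    (forall x yb, ellc (K:=K) s lk yb (g x) + ell (K:=K) s lk yb (g x) = M2) /\
    joint_expect P (etabar eta) (fun x k => ellbar (K:=K) s lk k (g x)) =
      ((K.-1)%:R%:E * joint_expect P (etabar eta) (fun x k => ellc (K:=K) s lk k (g x))
        - M1%:E + M2%:E)%E.
Proof.
move=> K2 eta0 eta1 meta mg ms s0 s1.
exists (M1f R K lk), (M2f R K lk).
split.
  case: lk => /=; first exact: ler0n.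
  by apply: divr_ge0 => //; apply: mulr_ge0; exact: ler0n.
split.
  case: lk => /=; [exact: ler0n | exact: ler0n].
split; first by move=> x; exact: (@M1_eq R K s K2 s1).
split; first by move=> x yb; exact: (@M2_eq R K s K2 s1).
have etab0 : forall x k, 0 <= etabar eta x k.
  move=> x k; apply: sumr_ge0 => j _; apply: mulr_ge0 => //; exact: T_ge0.
have etab1 : forall x, \sum_(k < K) etabar eta x k = 1.
  move=> x; rewrite /etabar exchange_big /=.
  rewrite -[RHS](eta1 x); apply: eq_bigr => j _.
  by rewrite -mulr_suml Tsum // mul1r.
set n := (K.-1)%:R : R.
set c := M2f R K lk - M1f R K lk.
pose A x := \sum_(k < K) etabar eta x k * ellc s lk k (g x).
have eqL : forall x, \sum_(k < K) etabar eta x k * ellbar s lk k (g x) = n * A x + c.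
  move=> x.
  under eq_bigr => k _ do rewrite ellbar_eq //.
  rewrite (eq_bigr (fun k => n * (etabar eta x k * ellc s lk k (g x)) + c * etabar eta x k)); last first.
    by move=> k _; rewrite /c /n; ring.
  by rewrite big_split /= -mulr_sumr -mulr_sumr etab1 mulr1.
have mA : measurable_fun setT A.
  apply: measurable_sum => k; apply: measurable_realfun.measurable_funM.
    apply: measurable_sum => j; apply: measurable_realfun.measurable_funM => //; exact: measurable_cst.
  case: lk {eqL c A} => /=.
    apply: measurable_realfun.measurable_funD.
      apply: measurable_realfun.measurable_funM; first exact: measurable_cst.
      by apply: msum_cond => i; apply: measurableT_comp.
    by apply: measurableT_comp => //; apply: measurable_realfun.measurable_funN.
  apply: msum_cond => i; apply: measurableT_comp => //.
  exact: measurable_realfun.measurable_funB.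
have intA : P.-integrable setT (EFin \o A).
  apply: (@le_integrable _ _ _ P setT measurableT (EFin \o A) (EFin \o cst (M2f R K lk))).
  - exact/measurable_EFinP.
  - move=> x _ /=; rewrite lee_fin.
    have M2ge0 : 0 <= M2f R K lk by case: (lk) => /=; exact: ler0n.
    have Age0 : 0 <= A x.
      by apply: sumr_ge0 => k _; apply: mulr_ge0 => //; exact: ellc_ge0.
    rewrite (ger0_norm Age0) (ger0_norm M2ge0).
    rewrite /A -[leRHS]mulr1 -(etab1 x) mulr_sumr.
    apply: ler_sum => k _; rewrite mulrC; apply: ler_wpM2r => //.
    by rewrite -(@M2_eq R K s K2 s1 lk k (g x)) lerDl ell_ge0.
  exact: finite_measure_integrable_cst.
rewrite /joint_expect.
rewrite (eq_integral (fun x => ((EFin \o (fun x => (n * A x)%R)) \+ (EFin \o cst c)) x)%E); last first.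
  by move=> x _; rewrite /= eqL.
rewrite integralD_EFin //; last first.
  exact: finite_measure_integrable_cst.
  exact: (integrableZl measurableT n intA).
rewrite (eq_integral (fun x => (n%:E * (EFin \o A) x)%E)) //.
rewrite integralZl //.
have -> : (\int[P]_x (EFin \o cst c) x = c%:E)%E.
  rewrite (eq_integral (cst c%:E)) // integral_cst //.
  by rewrite -[RHS]mule1; congr (_ * _)%E; exact: probability_setT.
have -> : (\int[P]_x (\sum_(k < K) etabar eta x k * ellc s lk k (g x))%:E)%E
  = (\int[P]_x (EFin \o A) x)%E by [].
have := integrable_fin_num measurableT intA.
case: (\int[P]_x (EFin \o A) x)%E => // r _.
rewrite /= -!EFinM -EFinB -!EFinD /c; congr EFin; ring.
Qed.
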